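(* Let $n\ge 1$. If $p(4,n)\neq 0$, then $n=8t$ or $n=8t-1$ for some integer $t\ge 2$.
   Context: For integers $m\ge 2$, $n\ge 1$, a valid $(m,n)$-sequence is a sequence $(a_1,\dots,a_{mn})$ with entries in $\{1,\dots,n\}$ in which each $k\in\{1,\dots,n\}$ occurs exactly $m$ times, and such that any two consecutive occurrences of $k$ are separated by exactly $k$ other terms; equivalently, there is an index $\theta_k$ such that $k$ occurs exactly at the positions $\theta_k,\ \theta_k+(k+1),\ \dots,\theta_k+(m-1)(k+1)$ (all in $\{1,\dots,mn\}$). The reversal of a valid sequence is again valid; $p(m,n)$ denotes the number of valid $(m,n)$-sequences counted up to reversal (i.e. the number of equivalence classes of valid sequences under identifying a sequence with its reversal). *)

(* Defs.v *)
From mathcomp Require Import all_boot.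
Set Implicit Arguments. Unset Strict Implicit. Unset Printing Implicit Defensive.

(* A candidate (m,n)-sequence: a function on the positions 0..mn-1
   (position j stands for the paper's index j+1) with values in 'I_n
   (value v stands for the paper's entry v+1). *)
Definition cand (m n : nat) := {ffun 'I_(m * n) -> 'I_n}.

(* Entry (in 1..n) of s at paper-position j (1-based), or 0 outside range. *)
Definition entry m n (s : cand m n) (j : nat) : nat :=
  if insub j.-1 is Some i then (if 0 < j then (s i).+1 else 0) else 0.

Definition valid m n (s : cand m n) : bool :=
  [forall k : 'I_n,
    [exists th : 'I_(m * n).+1,
      [&& 1 <= th, th + (m - 1) * (k.+2) <= m * n &
        [forall j : 'I_(m * n).+1,
          (1 <= j) ==>
          ((entry s j == k.+1) ==
           [exists i : 'I_m, j == th + i * (k.+2) :> nat])]]]].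

Definition rev_cand m n (s : cand m n) : cand m n :=
  [ffun i => s (rev_ord i)].

Definition p (m n : nat) : nat :=
  #|[set [set s; rev_cand s] | s in [set s : cand m n | valid s]]|.

(* Main.v *)
Require Import Defs.
From mathcomp Require Import all_boot.
Set Implicit Arguments. Unset Strict Implicit. Unset Printing Implicit Defensive.

Lemma valid_th n (s : cand 4 n) : valid s ->
  exists th : 'I_n -> nat,
    (forall k : 'I_n, 1 <= th k /\ th k + 3 * k.+2 <= 4 * n) /\
    (forall (k k' : 'I_n) (i i' : nat), i < 4 -> i' < 4 ->
        th k + i * k.+2 = th k' + i' * k'.+2 -> k = k').
Proof.
move=> /forallP H.
pose th k := val (xchoose (existsP (H k))).
have Hth k := xchooseP (existsP (H k)).
exists th; split.
  move=> k; have /and3P[H1 H2 _] := Hth k; split => //.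
have Hent : forall (k : 'I_n) i x, i < 4 -> x = th k + i * k.+2 -> x < (4 * n).+1 -> entry s x == k.+1.
  move=> k i x Hi Ex Hx.
  have /and3P[H1 H2 /forallP H3] := Hth k.
  have := H3 (Ordinal Hx) => /= /implyP; rewrite Ex.
  have -> : 1 <= th k + i * k.+2 by apply: leq_trans H1 (leq_addr _ _).
  move=> /(_ isT) /eqP ->; apply/existsP; exists (Ordinal Hi) => /=.
  by [].
move=> k k' i i' Hi Hi' E.
have Hx : th k + i * k.+2 < (4 * n).+1.
  have /and3P[_ H2 _] := Hth k; rewrite ltnS; apply: leq_trans H2.
  by rewrite leq_add2l leq_mul2r -ltnS Hi orbT.
have e1 := Hent k i _ Hi erefl Hx.
have e2 := Hent k' i' _ Hi' E Hx.
apply: val_inj; apply/eqP; rewrite -eqSS -(eqP e1) e2 //.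
Qed.

Lemma count_th n (th : 'I_n -> nat)
  (Hb : forall k : 'I_n, 1 <= th k /\ th k + 3 * k.+2 <= 4 * n)
  (Hi : forall (k k' : 'I_n) (i i' : nat), i < 4 -> i' < 4 ->
        th k + i * k.+2 = th k' + i' * k'.+2 -> k = k')
  (f : nat -> nat) :
  \sum_(x <- iota 1 (4 * n)) f x =
  \sum_(k < n) \sum_(i <- iota 0 4) f (th k + i * k.+2).
Proof.
pose L := [seq th k + i * k.+2 | k <- enum 'I_n, i <- iota 0 4].
have -> : \sum_(k < n) \sum_(i <- iota 0 4) f (th k + i * k.+2) = \sum_(x <- L) f x.
  by rewrite big_allpairs_dep big_enum.
have uL : uniq L.
  apply: allpairs_uniq; [exact: enum_uniq | exact: iota_uniq |].
  move=> [k i] [k' i'] H1 H2.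
  case/allpairsP: H1 => [[a b] [_ Hb1 /= [-> ->]]].
  case/allpairsP: H2 => [[a' b'] [_ Hb2 /= [-> ->]]] /= E.
  rewrite mem_iota in Hb1; rewrite mem_iota in Hb2.
  have ek := Hi a a' b b' Hb1 Hb2 E.
  subst a'; move/addnI: E => /eqP; rewrite eqn_mul2r /= => /eqP ->.
  by [].
have sub : {subset L <= iota 1 (4 * n)}.
  move=> x /allpairsP[[a b] [_ Hb1 /= ->]]; rewrite mem_iota /= in Hb1.
  have Hb4 : b < 4 by move: Hb1.
  have [h1 h2] := Hb a.
  rewrite mem_iota; apply/andP; split.
    by apply: leq_trans h1 (leq_addr _ _).
  rewrite add1n ltnS; apply: leq_trans h2.
  by rewrite leq_add2l leq_mul2r -ltnS Hb4 orbT.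
have sz : size (iota 1 (4 * n)) <= size L.
  rewrite size_iota size_allpairs_dep /=.
  have -> : forall l : seq 'I_n, sumn [seq 4 | _ <- l] = 4 * size l.
    by elim => //= _ l ->; rewrite mulnS.
  by rewrite size_enum_ord.
have [_ eq] := uniq_min_size uL sub sz.
apply: perm_big; apply: uniq_perm => //; first exact: iota_uniq.
Qed.

Definition wtA (r : nat) := if r < 2 then 2 else 0.
Definition wtB (r : nat) := if odd r then 0 else 2.
Definition gA (b : nat) := if b == 0 then 0 else 4.
Definition gB (b : nat) := if odd b then 4 else 0.

Lemma per_k (wt : nat -> nat) t d :
  \sum_(i <- iota 0 4) wt ((t + i * d) %% 4) =
  \sum_(i <- iota 0 4) wt ((t %% 4 + i * (d %% 4)) %% 4).
Proof.
apply: eq_bigr => i _; congr wt.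
by rewrite -[RHS]modnDmr modnMmr modnDmr modnDml.
Qed.

Lemma perA t d : (\sum_(i <- iota 0 4) wtA ((t + i * d) %% 4)) %% 8 = gA (d %% 4).
Proof.
rewrite per_k.
have : t %% 4 < 4 by rewrite ltn_mod.
have : d %% 4 < 4 by rewrite ltn_mod.
move: (t %% 4) (d %% 4) => a b.
rewrite /= !big_cons big_nil.
by case: a => [|[|[|[|a]]]]; case: b => [|[|[|[|b]]]].
Qed.

Lemma perB t d : (\sum_(i <- iota 0 4) wtB ((t + i * d) %% 4)) %% 8 = gB (d %% 4).
Proof.
rewrite per_k.
have : t %% 4 < 4 by rewrite ltn_mod.
have : d %% 4 < 4 by rewrite ltn_mod.
move: (t %% 4) (d %% 4) => a b.
rewrite /= !big_cons big_nil.
by case: a => [|[|[|[|a]]]]; case: b => [|[|[|[|b]]]].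
Qed.

Lemma lhs_sum (wt : nat -> nat) n :
  \sum_(x <- iota 1 (4 * n)) wt (x %% 4) = n * (wt 1 + wt 2 + wt 3 + wt 0).
Proof.
elim: n => [|n IH]; first by rewrite big_nil.
rewrite mulnSr iotaD big_cat IH (mulSn n) [RHS]addnC; congr (_ + _).
rewrite (addnC 1) iotaDl big_map.
have -> : iota 1 4 = [:: 1; 2; 3; 4] by [].
rewrite !big_cons big_nil (mulnC 4) !modnMDl.
by rewrite /= !addnA addn0.
Qed.

Lemma sum_period (h : nat -> nat) (Hh : forall k, h (k + 8) = h k) q r :
  \sum_(0 <= k < q * 8 + r) h k = q * \sum_(0 <= k < 8) h k + \sum_(0 <= k < r) h k.
Proof.
elim: q => [|q IH]; first by rewrite mul0n add0n.
rewrite mulSn -addnA (@big_cat_nat _ _ _ 8) ?leq_addr //.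
rewrite (big_addn 0 _ 8) addKn.
rewrite (@eq_bigr _ _ _ _ _ _ (fun i => h (i + 8)) h); last by move=> i _; exact: Hh.
rewrite IH mulSn; exact: addnA.
Qed.

Fixpoint srch (N k : nat) (occ : seq nat) : bool :=
  if k is k'.+1 then
    has (fun t => if (t + 3 * k'.+2 <= N) &&
                      all (fun i => t + i * k'.+2 \notin occ) (iota 0 4) then
                      srch N k' ([seq t + i * k'.+2 | i <- iota 0 4] ++ occ) else false)
        (iota 1 N)
  else true.

Lemma srchS N k occ : srch N k.+1 occ =
    has (fun t => if (t + 3 * k.+2 <= N) &&
                      all (fun i => t + i * k.+2 \notin occ) (iota 0 4) then
                      srch N k ([seq t + i * k.+2 | i <- iota 0 4] ++ occ) else false)
        (iota 1 N).
Proof. by []. Qed.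

Lemma srch_complete N k occ (th : nat -> nat) :
  (forall j, j < k -> 1 <= th j /\ th j + 3 * j.+2 <= N) ->
  (forall j i, j < k -> i < 4 -> th j + i * j.+2 \notin occ) ->
  (forall j j' i i', j < k -> j' < k -> i < 4 -> i' < 4 ->
      th j + i * j.+2 = th j' + i' * j'.+2 -> j = j') ->
  srch N k occ.
Proof.
elim: k occ => [//|k IH] occ Hb Ho Hi; rewrite srchS.
apply/hasP; exists (th k).
  have [h1 h2] := Hb k (ltnSn k).
  rewrite mem_iota h1 add1n ltnS; apply: leq_trans h2; exact: leq_addr.
have [_ h2] := Hb k (ltnSn k).
have -> : all (fun i => th k + i * k.+2 \notin occ) (iota 0 4).
  apply/allP => i; rewrite mem_iota /= => Hi4; exact: Ho.
rewrite h2.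
apply: IH.
- by move=> j Hj; apply: Hb; apply: ltnW.
- move=> j i Hj Hi4; rewrite mem_cat negb_or; apply/andP; split.
    apply/negP => /mapP[i' Hi' E].
    rewrite mem_iota /= in Hi'.
    have := Hi j k i i' (ltnW Hj) (ltnSn k) Hi4 Hi' E.
    by move=> ej; rewrite ej ltnn in Hj.
  by apply: Ho => //; apply: ltnW.
- by move=> j j' i i' Hj Hj'; apply: Hi; apply: ltnW.
Qed.

Lemma no_small n' :
  srch (4 * n'.+1) n'.+1 [::] = false ->
  forall th : 'I_n'.+1 -> nat,
    (forall k : 'I_n'.+1, 1 <= th k /\ th k + 3 * k.+2 <= 4 * n'.+1) ->
    (forall (k k' : 'I_n'.+1) (i i' : nat), i < 4 -> i' < 4 ->
        th k + i * k.+2 = th k' + i' * k'.+2 -> k = k') -> False.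
Proof.
move=> Hs th Hb Hi.
suff : srch (4 * n'.+1) n'.+1 [::] by rewrite Hs.
apply: (@srch_complete _ _ _ (fun j => th (inord j))).
- by move=> j Hj; have := Hb (inord j); rewrite inordK.
- by [].
- move=> j j' i i' Hj Hj' Hi4 Hi4' E.
  have := Hi (inord j) (inord j') i i' Hi4 Hi4'.
  rewrite !inordK // => /(_ E) /(congr1 val) /=.
  by rewrite !inordK.
Qed.

Lemma srch7 : srch (4 * 7) 7 [::] = false. Proof. by vm_compute. Qed.
Lemma srch8 : srch (4 * 8) 8 [::] = false. Proof. by vm_compute. Qed.

Lemma resid r : r < 8 ->
  (r * 4) %% 8 = (\sum_(0 <= k < r) gA (k.+2 %% 4)) %% 8 ->
  (r * 4) %% 8 = (\sum_(0 <= k < r) gB (k.+2 %% 4)) %% 8 -> r = 0 \/ r = 7.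
Proof.
rewrite unlock.
by case: r => [|[|[|[|[|[|[|[|r]]]]]]]]; auto.
Qed.

Lemma per4 (g : nat -> nat) k : g ((k + 8).+2 %% 4) = g (k.+2 %% 4).
Proof.
have -> : (k + 8).+2 = 2 * 4 + k.+2 by rewrite addnC.
by rewrite modnMDl.
Qed.



Theorem proposition2 (n : nat) :
  1 <= n -> p 4 n <> 0 ->
  exists t : nat, 2 <= t /\ (n = 8 * t \/ n = 8 * t - 1).
Proof.
move=> n1 hp.
have [s Hs] : exists s : cand 4 n, valid s.
  case: (pickP (fun s : cand 4 n => valid s)) => [s Hs|H]; first by exists s.
  exfalso; apply: hp; rewrite /p.
  have -> : [set s : cand 4 n | valid s] = set0.
    by apply/setP => s; rewrite inE H in_set0.
  by rewrite imset0 cards0.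
have [th [Hb Hi]] := valid_th Hs.
have cA0 := count_th Hb Hi (fun x => wtA (x %% 4)).
rewrite lhs_sum in cA0.
have cA : n * 4 = _ := cA0.
have cB0 := count_th Hb Hi (fun x => wtB (x %% 4)).
rewrite lhs_sum in cB0.
have cB : n * 4 = _ := cB0.
have mA : (n * 4) %% 8 = (\sum_(0 <= k < n) gA (k.+2 %% 4)) %% 8.
  rewrite cA -[LHS]modn_summ (eq_bigr (fun k : 'I_n => gA (k.+2 %% 4))).
    by rewrite big_mkord.
  by move=> k _; exact: perA.
have mB : (n * 4) %% 8 = (\sum_(0 <= k < n) gB (k.+2 %% 4)) %% 8.
  rewrite cB -[LHS]modn_summ (eq_bigr (fun k : 'I_n => gB (k.+2 %% 4))).
    by rewrite big_mkord.
  by move=> k _; exact: perB.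
have En := divn_eq n 8.
set q := n %/ 8 in En; set r := n %% 8 in En.
have r8 : r < 8 by rewrite ltn_mod.
have L4 : (n * 4) %% 8 = (r * 4) %% 8.
  by rewrite En mulnDl mulnAC modnMDl.
rewrite L4 En (sum_period (fun k => per4 gA k)) in mA.
rewrite L4 En (sum_period (fun k => per4 gB k)) in mB.
have HA : \sum_(0 <= k < 8) gA (k.+2 %% 4) = 3 * 8 by rewrite unlock.
rewrite HA in mA.
have HB : \sum_(0 <= k < 8) gB (k.+2 %% 4) = 2 * 8 by rewrite unlock.
rewrite HB in mB.
rewrite mulnA modnMDl in mA; rewrite mulnA modnMDl in mB.
case: (resid r8 mA mB) => Er; rewrite Er in En.
- case: q En => [|[|q]] En.
  + by rewrite En in n1.
  + subst n; exfalso; exact: (no_small srch8 Hb Hi).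
  + exists q.+2; split => //; left; by rewrite En addn0 mulnC.
- case: q En => [|q] En.
  + subst n; exfalso; exact: (no_small srch7 Hb Hi).
  + exists q.+2; split => //; right.
    by rewrite En (mulnSr 8 q.+1) -addnBA // mulnC.
Qed.
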